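(* Let $1\ge a>0$. (a) The memory-one strategy $\mathbf p=a\,(1,0,1,0)+(1-a)(1,1,0,0)$ (a mixture of Tit-for-Tat and Repeat) is good, and for every strategy pattern of Y and every associated limit distribution the expected payoffs satisfy $s_Y=s_X$. (b) The memory-one strategy $\mathbf p=a\,(1,0,0,0)+(1-a)(1,1,0,0)$ (a mixture of Grim and Repeat) is good.
   Context: Iterated Prisoner's Dilemma: payoffs $T>R>P>S$ with $2R>T+S$; outcomes of a round are ordered $cc,cd,dc,dd$ (first letter X's play, second Y's; $c$ = cooperate, $d$ = defect); payoff vectors $\mathbf S_X=(R,S,T,P)$, $\mathbf S_Y=(R,T,S,P)$. A memory-one strategy for X is $\mathbf p=(p_1,p_2,p_3,p_4)\in[0,1]^4$, where $p_i$ is the probability that X plays $c$ in the next round given that the current round had the $i$-th outcome. A strategy pattern for Y is an arbitrary (possibly randomized and history-dependent) rule for Y's play in each round. Given initial plays and the rules used, let $\mathbf v^n$ be the probability distribution of the outcome of round $n$; a limit distribution is any limit point $\mathbf v$ of the Cesàro averages $\frac1n\sum_{k=1}^n\mathbf v^k$, and the associated expected payoffs are $s_X=\langle\mathbf v\cdot\mathbf S_X\rangle$, $s_Y=\langle\mathbf v\cdot\mathbf S_Y\rangle$. $\mathbf p$ is agreeable if $p_1=1$. $\mathbf p$ is good if it is agreeable and, for every strategy pattern of Y and every associated limit distribution, $s_Y\ge R$ implies $s_Y=s_X=R$. *)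

(* Defs.v *)
From HB Require Import structures.
From mathcomp Require Import all_boot all_order all_algebra.
From mathcomp Require Import reals.
Set Implicit Arguments. Unset Strict Implicit. Unset Printing Implicit Defensive.
Import Order.TTheory GRing.Theory Num.Theory.
Local Open Scope ring_scope.

(* An outcome of a round: (X cooperates?, Y cooperates?).
   The paper's ordering cc, cd, dc, dd corresponds to
   (true,true), (true,false), (false,true), (false,false). *)
Definition outcome := (bool * bool)%type.

Section IPD.
Variable R : realType.

Definition vec4 (x1 x2 x3 x4 : R) (o : outcome) : R :=
  match o with
  | (true, true) => x1
  | (true, false) => x2
  | (false, true) => x3
  | (false, false) => x4
  end.

Definition mix (a : R) (u v : outcome -> R) (o : outcome) : R :=
  a * u o + (1 - a) * v o.

Definition TFT : outcome -> R := vec4 1 0 1 0.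
Definition Repeat : outcome -> R := vec4 1 1 0 0.
Definition Grim : outcome -> R := vec4 1 0 0 0.

Definition PD (pT pR pP pS : R) : Prop :=
  [/\ pT > pR, pR > pP, pP > pS & 2 * pR > pT + pS].

Definition SX (pT pR pP pS : R) : outcome -> R := vec4 pR pS pT pP.
Definition SY (pT pR pP pS : R) : outcome -> R := vec4 pR pT pS pP.

(* A memory-one strategy p for X (p o = prob. X cooperates next round
   given the current outcome o). *)
Definition mem1 (p : outcome -> R) : Prop := forall o, 0 <= p o <= 1.

(* A strategy pattern for Y: a (behaviour) rule giving, for each history of
   previous outcomes, the probability that Y cooperates in the next round. *)
Definition ystrat (ys : seq outcome -> R) : Prop := forall h, 0 <= ys h <= 1.

Definition bern (q : R) (b : bool) : R := if b then q else 1 - q.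

Definition probX (p : outcome -> R) (x0 : R) (h : seq outcome) : R :=
  if h is _ :: _ then p (last (true, true) h) else x0.

Definition step (p : outcome -> R) (x0 : R) (ys : seq outcome -> R)
  (h : seq outcome) (o : outcome) : R :=
  bern (probX p x0 h) o.1 * bern (ys h) o.2.

Definition histprob p x0 ys (h : seq outcome) : R :=
  \prod_(i < size h) step p x0 ys (take i h) (nth (true, true) h i).

(* v^(n+1): distribution of the outcome of round n+1 *)
Definition vdist p x0 ys (n : nat) (o : outcome) : R :=
  \sum_(t : n.-tuple outcome) histprob p x0 ys (rcons t o).

Definition cesaro p x0 ys (n : nat) (o : outcome) : R :=
  (\sum_(k < n) vdist p x0 ys k o) / n%:R.

Definition limit_dist p x0 ys (v : outcome -> R) : Prop :=
  forall eps : R, 0 < eps -> forall N : nat, exists n : nat,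
    (N <= n)%N /\ (0 < n)%N /\
    forall o : outcome, `|cesaro p x0 ys n o - v o| < eps.

Definition payoff (S : outcome -> R) (v : outcome -> R) : R :=
  \sum_(o : outcome) v o * S o.

Definition agreeable (p : outcome -> R) : Prop := p (true, true) = 1.

Definition good (pT pR pP pS : R) (p : outcome -> R) : Prop :=
  agreeable p /\
  forall (x0 : R) (ys : seq outcome -> R) (v : outcome -> R),
    0 <= x0 <= 1 -> ystrat ys -> limit_dist p x0 ys v ->
    payoff (SY pT pR pP pS) v >= pR ->
    payoff (SY pT pR pP pS) v = pR /\ payoff (SX pT pR pP pS) v = pR.

End IPD.

(* Main.v *)
Require Import Defs.
From HB Require Import structures.
From mathcomp Require Import all_boot all_order all_algebra.
From mathcomp Require Import reals.
From mathcomp Require Import ring lra.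
Set Implicit Arguments. Unset Strict Implicit.
Import Order.TTheory GRing.Theory Num.Theory.
Local Open Scope ring_scope.

Lemma sum4 (R : realType) (F : outcome -> R) :
  \sum_(o : outcome) F o = F (true,true) + F (true,false) + F (false,true) + F (false,false).
Proof.
transitivity (\sum_(i : bool) \sum_(j : bool) F (i,j)).
  by rewrite pair_bigA; apply: eq_bigr => -[x y].
by rewrite !big_bool /= !addrA.
Qed.

Lemma histprob_rcons (R : realType) p x0 (ys : seq outcome -> R) h o :
  histprob p x0 ys (rcons h o) = histprob p x0 ys h * step p x0 ys h o.
Proof.
rewrite /histprob size_rcons big_ord_recr /=.
rewrite -cats1 take_size_cat // nth_cat ltnn subnn /=.
congr (_ * _); apply: eq_bigr => i _.
by rewrite takel_cat ?(ltnW (ltn_ord i)) // nth_cat ltn_ord.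
Qed.

Lemma sum_tupleS (R : realType) n (F : seq outcome -> R) :
  \sum_(t : n.+1.-tuple outcome) F t =
  \sum_(t : n.-tuple outcome) \sum_(o : outcome) F (rcons t o).
Proof.
rewrite pair_big /=.
rewrite (reindex (fun u : n.+1.-tuple outcome =>
   ([tuple of belast (thead u) (behead u)], last (thead u) (behead u)))) /=.
  apply: eq_bigr => u _ /=.
  congr F. case: u => [[|x s] /= Hs] //.
  by rewrite -lastI.
exists (fun q : n.-tuple outcome * outcome => [tuple of rcons q.1 q.2]) => [u _|[t o] _].
  apply: val_inj => /=; case: u => [[|x s] /= Hs] //. by rewrite -lastI.
case: t => [s Hs].
congr pair; first apply: val_inj => /=.
  case: s Hs => [|x s] Hs //=. by rewrite belast_rcons.
case: s Hs => [|x s] Hs //=. by rewrite last_rcons.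
Qed.

Lemma bern_ge0 (R : realType) (q : R) b : 0 <= q <= 1 -> 0 <= bern q b.
Proof. by case/andP=> h0 h1; case: b => //=; rewrite subr_ge0. Qed.

Lemma probX_in (R : realType) (p : outcome -> R) x0 h :
  mem1 p -> 0 <= x0 <= 1 -> 0 <= probX p x0 h <= 1.
Proof. by move=> hp hx; case: h => //= *; apply: hp. Qed.

Lemma step_ge0 (R : realType) (p : outcome -> R) x0 ys h o :
  mem1 p -> 0 <= x0 <= 1 -> ystrat ys -> 0 <= step p x0 ys h o.
Proof.
by move=> hp hx hy; rewrite /step mulr_ge0 // bern_ge0 // ?probX_in.
Qed.

Lemma histprob_ge0 (R : realType) (p : outcome -> R) x0 ys h :
  mem1 p -> 0 <= x0 <= 1 -> ystrat ys -> 0 <= histprob p x0 ys h.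
Proof.
by move=> hp hx hy; rewrite /histprob; apply: prodr_ge0 => i _; apply: step_ge0.
Qed.

Lemma sum_step (R : realType) (p : outcome -> R) x0 ys h :
  \sum_o step p x0 ys h o = 1.
Proof. rewrite sum4 /step /=; ring. Qed.

Lemma sum_step_rep (R : realType) (p : outcome -> R) x0 ys h :
  \sum_o step p x0 ys h o * @Repeat R o = probX p x0 h.
Proof. rewrite sum4 /step /Repeat /=; ring. Qed.

Lemma hsum (R : realType) (p : outcome -> R) x0 ys n :
  \sum_(t : n.-tuple outcome) histprob p x0 ys t = 1.
Proof.
elim: n => [|n IH].
  rewrite (big_pred1 [tuple]) => [|t]; last by apply/esym/eqP/val_inj; case: t => [[]].
  by rewrite /histprob big_ord0.
rewrite sum_tupleS -{}IH; apply: eq_bigr => t _.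
by rewrite -[RHS]mulr1 -(sum_step p x0 ys t) mulr_sumr; apply: eq_bigr => o _; rewrite histprob_rcons.
Qed.

Lemma vdistE (R : realType) (p : outcome -> R) x0 ys n o :
  vdist p x0 ys n o = \sum_(t : n.-tuple outcome) histprob p x0 ys t * step p x0 ys t o.
Proof. by apply: eq_bigr => t _; rewrite histprob_rcons. Qed.

Lemma sum_vdist (R : realType) (p : outcome -> R) x0 ys n :
  \sum_o vdist p x0 ys n o = 1.
Proof.
under eq_bigr do rewrite vdistE.
rewrite exchange_big /= -(hsum p x0 ys n); apply: eq_bigr => t _.
by rewrite -mulr_sumr sum_step mulr1.
Qed.

Definition Qx (R : realType) (p : outcome -> R) x0 ys n :=
  \sum_(t : n.-tuple outcome) histprob p x0 ys t * probX p x0 t.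

Lemma vdist_rep (R : realType) (p : outcome -> R) x0 ys n :
  \sum_o vdist p x0 ys n o * @Repeat R o = Qx p x0 ys n.
Proof.
under eq_bigr do rewrite vdistE mulr_suml.
rewrite exchange_big /=; apply: eq_bigr => t _.
by rewrite -(sum_step_rep p x0 ys) mulr_sumr; apply: eq_bigr => o _; rewrite mulrA.
Qed.

Lemma vdist_p (R : realType) (p : outcome -> R) x0 ys n :
  \sum_o vdist p x0 ys n o * p o = Qx p x0 ys n.+1.
Proof.
rewrite /Qx (sum_tupleS n (fun s => histprob p x0 ys s * probX p x0 s)).
under eq_bigr do rewrite /vdist mulr_suml.
rewrite exchange_big /=; apply: eq_bigr => t _; apply: eq_bigr => o _.
by rewrite /probX; case: t => [[|x s] Hs] /=; rewrite ?last_rcons //= -cats1 last_cat.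
Qed.

Lemma Qx_in (R : realType) (p : outcome -> R) x0 ys n :
  mem1 p -> 0 <= x0 <= 1 -> ystrat ys -> 0 <= Qx p x0 ys n <= 1.
Proof.
move=> hp hx hy; apply/andP; split.
  by apply: sumr_ge0 => t _; rewrite mulr_ge0 ?histprob_ge0 //; case/andP: (probX_in t hp hx).
rewrite -(hsum p x0 ys n); apply: ler_sum => t _.
rewrite ler_piMr ?histprob_ge0 //; by case/andP: (probX_in t hp hx).
Qed.

Lemma vdist_ge0 (R : realType) (p : outcome -> R) x0 ys n o :
  mem1 p -> 0 <= x0 <= 1 -> ystrat ys -> 0 <= vdist p x0 ys n o.
Proof. by move=> *; apply: sumr_ge0 => t _; apply: histprob_ge0. Qed.

Lemma ces_ge0 (R : realType) (p : outcome -> R) x0 ys n o :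
  mem1 p -> 0 <= x0 <= 1 -> ystrat ys -> 0 <= cesaro p x0 ys n o.
Proof.
by move=> *; rewrite /cesaro divr_ge0 // sumr_ge0 // => k _; apply: vdist_ge0.
Qed.

Lemma ces_sum (R : realType) (p : outcome -> R) x0 ys n :
  (0 < n)%N -> \sum_o cesaro p x0 ys n o = 1.
Proof.
move=> hn; rewrite /cesaro -mulr_suml exchange_big /=.
under eq_bigr do rewrite sum_vdist.
by rewrite sumr_const card_ord -[1 *+ n]/(n%:R) divff // pnatr_eq0 -lt0n.
Qed.

Lemma ces_w (R : realType) (p : outcome -> R) x0 ys n :
  \sum_o cesaro p x0 ys n o * (p o - @Repeat R o) = (Qx p x0 ys n - Qx p x0 ys 0) / n%:R.
Proof.
rewrite /cesaro.
under eq_bigr do rewrite mulrAC.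
rewrite -mulr_suml; congr (_ / _).
under eq_bigr do rewrite mulr_suml.
rewrite exchange_big /=.
under eq_bigr => k _ do under eq_bigr do rewrite mulrBr.
under eq_bigr do rewrite sumrB vdist_p vdist_rep.
by rewrite -(big_mkord xpredT (fun k => Qx p x0 ys k.+1 - Qx p x0 ys k)) telescope_sumr.
Qed.

Lemma lim_close (R : realType) (p : outcome -> R) x0 ys v (c : outcome -> R) :
  limit_dist p x0 ys v -> forall e, 0 < e -> forall N, exists n, [/\ (N <= n)%N, (0 < n)%N &
   `|\sum_o cesaro p x0 ys n o * c o - \sum_o v o * c o| <= e].
Proof.
move=> hl e he N.
set s := \sum_o `|c o|.
have s0 : 0 <= s by apply: sumr_ge0 => o _.
have s1 : 0 < 1 + s by lra.
have [n [hN [hn hc]]] := hl (e / (1 + s)) (divr_gt0 he s1) N.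
exists n; split => //.
rewrite -sumrB.
apply: le_trans (ler_norm_sum _ _ _) _.
apply: (@le_trans _ _ (\sum_o e / (1 + s) * `|c o|)).
  apply: ler_sum => o _; rewrite -mulrBl normrM ler_wpM2r //.
  exact: ltW.
rewrite -mulr_sumr -/s.
rewrite mulrAC ler_pdivrMr // ler_wpM2l ?(ltW he) //; lra.
Qed.

Lemma small0 (R : realType) (x : R) : (forall e, 0 < e -> `|x| <= e) -> x = 0.
Proof.
move=> h; apply/eqP; rewrite -normr_le0; apply/ler_addgt0Pr => e he.
by rewrite add0r; apply: h.
Qed.

Lemma lim_eq (R : realType) (p : outcome -> R) x0 ys v (c : outcome -> R) (L B : R) :
  0 <= B -> limit_dist p x0 ys v ->
  (forall n, (0 < n)%N -> `|\sum_o cesaro p x0 ys n o * c o - L| <= B / n%:R) ->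
  \sum_o v o * c o = L.
Proof.
move=> hB hl hc; apply/eqP; rewrite -subr_eq0; apply/eqP; apply: small0 => e he.
have e2 : 0 < e / 2 by rewrite divr_gt0.
have hb0 : 0 <= B * 2 / e by rewrite divr_ge0 ?mulr_ge0 // ltW.
have hbN := archi_boundP hb0.
have [n [hN hn hcl]] := lim_close c hl e2 (Num.bound (B * 2 / e)).
have hn' : 0 < n%:R :> R by rewrite ltr0n.
have hNn : (Num.bound (B * 2 / e))%:R <= n%:R :> R by rewrite ler_nat.
have hB2 : B / n%:R <= e / 2.
  rewrite ler_pdivrMr //.
  have : B * 2 / e < n%:R by apply: lt_le_trans hNn.
  rewrite ltr_pdivrMr // => h.
  lra.
have := hc n hn.
move: hcl; set X := \sum_o cesaro p x0 ys n o * c o; set Y := \sum_o v o * c o.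
move=> h1 h2.
have : `|Y - L| <= `|Y - X| + `|X - L|.
  have -> : Y - L = (Y - X) + (X - L) by ring.
  exact: ler_normD.
rewrite distrC in h1; lra.
Qed.

Lemma key (R : realType) (p : outcome -> R) x0 ys v :
  mem1 p -> 0 <= x0 <= 1 -> ystrat ys -> limit_dist p x0 ys v ->
  [/\ forall o, 0 <= v o, \sum_o v o = 1 &
      \sum_o v o * (p o - @Repeat R o) = 0].
Proof.
move=> hp hx hy hl; split.
- move=> o; apply/ler_addgt0Pr => e he.
  have [n [_ [_ h]]] := hl e he 0%N.
  have := h o; have := ces_ge0 n o hp hx hy.
  have := ler_norm (cesaro p x0 ys n o - v o); lra.
- rewrite -(@lim_eq R p x0 ys v (fun _ => 1) 1 0) //.
    by apply: eq_bigr => o _; rewrite mulr1.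
  move=> n hn; rewrite mul0r.
  under eq_bigr do rewrite mulr1.
  by rewrite ces_sum // subrr normr0.
- apply: (@lim_eq R p x0 ys v _ 0 1) => // n hn.
  rewrite ces_w subr0 normrM normfV normr_nat ler_wpM2r ?invr_ge0 ?ler0n //.
  have := Qx_in n hp hx hy; have := Qx_in 0 hp hx hy.
  rewrite ler_norml => /andP[? ?] /andP[? ?]; apply/andP; split; lra.
Qed.

Lemma mix_in (R : realType) (a : R) u w : 0 < a <= 1 -> mem1 u -> mem1 w -> mem1 (mix a u w).
Proof.
move=> /andP[a0 a1] hu hw o; rewrite /mix.
have /andP[? ?] := hu o; have /andP[? ?] := hw o.
apply/andP; split; nra.
Qed.

Lemma mem1_vec4 (R : realType) (x1 x2 x3 x4 : R) :
  0 <= x1 <= 1 -> 0 <= x2 <= 1 -> 0 <= x3 <= 1 -> 0 <= x4 <= 1 -> mem1 (vec4 x1 x2 x3 x4).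
Proof. by move=> *; case=> [[] []]. Qed.

Theorem corollary1p4 (R : realType) (pT pR pP pS : R) (a : R) :
  PD pT pR pP pS -> 0 < a <= 1 ->
  (good pT pR pP pS (mix a (@TFT R) (@Repeat R)) /\
   forall (x0 : R) (ys : seq outcome -> R) (v : outcome -> R),
     0 <= x0 <= 1 -> ystrat ys ->
     limit_dist (mix a (@TFT R) (@Repeat R)) x0 ys v ->
     payoff (SY pT pR pP pS) v = payoff (SX pT pR pP pS) v) /\
  good pT pR pP pS (mix a (@Grim R) (@Repeat R)).
Proof.
move=> [hTR hRP hPS h2R] ha.
have i01 : 0 <= (0:R) <= 1 by rewrite lexx ler01.
have i11 : 0 <= (1:R) <= 1 by rewrite lexx ler01.
have m1 : mem1 (mix a (@TFT R) (@Repeat R)).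
  by apply: mix_in => //; apply: mem1_vec4.
have m2 : mem1 (mix a (@Grim R) (@Repeat R)).
  by apply: mix_in => //; apply: mem1_vec4.
case/andP: ha => a0 a1.
have eq1 : forall x0 ys v, 0 <= x0 <= 1 -> ystrat ys ->
    limit_dist (mix a (@TFT R) (@Repeat R)) x0 ys v ->
    [/\ (forall o, 0 <= v o),
        v (true,true) + v (true,false) + v (false,true) + v (false,false) = 1 &
        v (true,false) = v (false,true)].
  move=> x0 ys v hx hy hl; have [h0 h1 h2] := key m1 hx hy hl.
  move: h1 h2; rewrite !sum4 /mix /TFT /Repeat /= => h1 h2.
  split => //; nra.
split; [split; [split|]|split].
- by rewrite /agreeable /mix /TFT /Repeat /=; ring.
- move=> x0 ys v hx hy hl.
  have [h0 ? e] := eq1 x0 ys v hx hy hl.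
  have := h0 (true,true); have := h0 (true,false); have := h0 (false,true);
  have := h0 (false,false) => ? ? ? ?.
  rewrite /payoff !sum4 /SY /SX /= => hge.
  split; nra.
- move=> x0 ys v hx hy hl.
  have [_ _ e] := eq1 x0 ys v hx hy hl.
  rewrite /payoff !sum4 /SY /SX /=; rewrite e; ring.
- by rewrite /agreeable /mix /Grim /Repeat /=; ring.
- move=> x0 ys v hx hy hl; have [h0 h1 h2] := key m2 hx hy hl.
  move: h1 h2; rewrite /payoff !sum4 /mix /Grim /Repeat /SY /SX /= => h1 h2 hge.
  have := h0 (true,true); have := h0 (true,false); have := h0 (false,true);
  have := h0 (false,false) => ? ? ? ?.
  have e2 : v (true,false) = 0 by nra.
  rewrite e2 in h1 hge *.
  have e3 : v (false,true) = 0 by nra.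
  have e4 : v (false,false) = 0 by nra.
  rewrite e3 e4 in h1 hge *; split; nra.
Qed.
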